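(* There is a semigroup which is not moving but in which the proper IP sets are partition regular (for every proper IP set $A$ and every partition of $A$ into finitely many pieces, some piece is a proper IP set).
   Context: Semigroups are written additively and are not assumed commutative. An infinite semigroup $S$ is moving if for each infinite $A\subseteq S$ and each finite $F\subseteq S$ there are $a_1,\dotsc,a_k\in A$ such that $\{a_1+s,\dotsc,a_k+s\}\not\subseteq F$ for all but finitely many $s\in S$. For a sequence $a_1,a_2,\dotsc$, $\mathrm{FS}(a_1,a_2,\dotsc):=\{a_{i_1}+\dotsb+a_{i_m}: m\ge1,\ i_1<\dotsb<i_m\}$; a proper IP set is a set containing $\mathrm{FS}(b_1,b_2,\dotsc)$ for some injective sequence $b_1,b_2,\dotsc$. *)

(* Defs.v *)
From Stdlib Require Import List Sorting.Sorted Arith.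
Import ListNotations.

Section Semigroup.
Context {S : Type} (op : S -> S -> S).

Definition finite_set (A : S -> Prop) : Prop :=
  exists l : list S, forall x, A x -> In x l.

Definition infinite_set (A : S -> Prop) : Prop := ~ finite_set A.

(* S is moving (S assumed infinite): for each infinite A and finite F there are
   a_1..a_k in A such that {a_1+s,...,a_k+s} is not contained in F for all but
   finitely many s, i.e. the set of s with {a_i + s} ⊆ F is finite. *)
Definition moving : Prop :=
  forall (A F : S -> Prop), infinite_set A -> finite_set F ->
    exists l : list S, (forall a, In a l -> A a) /\
      finite_set (fun s => forall a, In a l -> F (op a s)).

Fixpoint lsum (b : nat -> S) (i : nat) (l : list nat) : S :=
  match l with
  | [] => b i
  | j :: l' => op (b i) (lsum b j l')
  end.

Definition FS (b : nat -> S) (x : S) : Prop :=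
  exists (i : nat) (l : list nat), Sorted lt (i :: l) /\ x = lsum b i l.

Definition proper_IP (A : S -> Prop) : Prop :=
  exists b : nat -> S, (forall m n, b m = b n -> m = n) /\
    (forall x, FS b x -> A x).

Definition proper_IP_partition_regular : Prop :=
  forall A : S -> Prop, proper_IP A ->
  forall (n : nat) (c : S -> nat), (forall x, A x -> c x < n) ->
    exists i, i < n /\ proper_IP (fun x => A x /\ c x = i).

End Semigroup.

(* Main.v *)
Require Import Defs.
From Stdlib Require Import List Sorting.Sorted Arith Lia Classical ClassicalEpsilon.
Import ListNotations.
From Stdlib Require Import Bool.
Open Scope bool_scope.
Open Scope nat_scope.

Definition opn (x y : nat) : nat :=
  if Nat.even x && negb (Nat.even y) then 0 else y.

Lemma opn_assoc : forall x y z, opn x (opn y z) = opn (opn x y) z.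
Proof.
  intros x y z; unfold opn.
  destruct (Nat.even x) eqn:Ex, (Nat.even y) eqn:Ey, (Nat.even z) eqn:Ez;
    simpl; rewrite ?Ex, ?Ey, ?Ez; simpl; reflexivity.
Qed.

Lemma list_bound : forall l : list nat, exists m, forall x, In x l -> x < m.
Proof.
  induction l as [|a l [m Hm]].
  - exists 0; intros x [].
  - exists (S (a + m)); intros x [<-|H]; [lia|]. specialize (Hm x H); lia.
Qed.

Definition inf (P : nat -> Prop) := forall N, exists n, N <= n /\ P n.

Lemma pigeon : forall N (P : nat -> nat -> Prop),
  inf (fun n => exists k, k < N /\ P k n) -> exists k, k < N /\ inf (P k).
Proof.
  induction N as [|N IH]; intros P H.
  - destruct (H 0) as [n [_ [k [Hk _]]]]; lia.
  - destruct (classic (inf (P N))) as [HN|HN].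
    + exists N; split; [lia|exact HN].
    + unfold inf in HN. apply not_all_ex_not in HN as [M HM].
      destruct (IH P) as [k [Hk Hi]].
      * intros B. destruct (H (B + M)) as [n [Hn [k [Hk Pk]]]].
        exists n; split; [lia|]. exists k; split; [|exact Pk].
        destruct (Nat.eq_dec k N) as [->|]; [|lia].
        exfalso; apply HM; exists n; split; [lia|exact Pk].
      * exists k; split; [lia|exact Hi].
Qed.

Lemma inf_seq : forall P, inf P -> exists g : nat -> nat,
  (forall m n, m < n -> g m < g n) /\ (forall n, P (g n)).
Proof.
  intros P H.
  assert (Hf : forall N, {n | N <= n /\ P n}).
  { intro N; apply constructive_indefinite_description; apply H. }
  set (f := fun N => proj1_sig (Hf N)).
  assert (Hf1 : forall N, N <= f N /\ P (f N)) by (intro N; exact (proj2_sig (Hf N))).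
  exists (fix g k := match k with 0 => f 0 | S k' => f (S (g k')) end).
  split.
  - intros m n Hmn. induction Hmn.
    + simpl. destruct (Hf1 (S ((fix g k := match k with 0 => f 0 | S k' => f (S (g k')) end) m))); lia.
    + simpl. match goal with |- _ < f (S ?t) => destruct (Hf1 (S t)) end; lia.
  - intros [|n]; simpl; apply Hf1.
Qed.

Lemma lsum_par : forall (b : nat -> nat) q, (forall n, Nat.even (b n) = q) ->
  forall l i, exists j, lsum opn b i l = b j.
Proof.
  intros b q Hq l; induction l as [|j0 l IH]; intro i; simpl.
  - exists i; reflexivity.
  - destruct (IH j0) as [j Hj]; rewrite Hj. exists j. unfold opn.
    rewrite !Hq. destruct q; reflexivity.
Qed.

Theorem corollary4p1 :
  exists (S : Type) (op : S -> S -> S),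
    (forall x y z : S, op x (op y z) = op (op x y) z) /\
    infinite_set (fun _ : S => True) /\
    ~ moving op /\
    proper_IP_partition_regular op.
Proof.
  exists nat, opn. split; [exact opn_assoc|]. split; [|split].
  - intros [l Hl]. destruct (list_bound l) as [m Hm].
    specialize (Hm m (Hl m I)); lia.
  - intro H. destruct (H (fun x => Nat.even x = true) (fun x => x = 0)) as [l [Hl [l' Hl']]].
    + intros [l Hl]. destruct (list_bound l) as [m Hm].
      assert (E : Nat.even (2 * m) = true) by apply Nat.even_mul.
      specialize (Hm _ (Hl _ E)); lia.
    + exists [0]; intros x ->; left; reflexivity.
    + destruct (list_bound l') as [m Hm].
      assert (Hs : forall a, In a l -> opn a (2 * m + 1) = 0).
      { intros a Ha. unfold opn. rewrite (Hl a Ha).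
        rewrite Nat.even_add, Nat.even_mul. reflexivity. }
      specialize (Hm _ (Hl' _ Hs)); lia.
  - intros A [b [Hinj HFS]] N c Hc.
    assert (HA : forall n, A (b n)).
    { intro n; apply HFS; exists n, []; split; [constructor; constructor|reflexivity]. }
    destruct (pigeon N (fun k n => c (b n) = k)) as [k [Hk Hik]].
    { intro B; exists B; split; [lia|]. exists (c (b B)); split; [apply Hc, HA|reflexivity]. }
    destruct (pigeon 2 (fun p n => c (b n) = k /\ Nat.b2n (Nat.even (b n)) = p)) as [p [Hp Hip]].
    { intro B. destruct (Hik B) as [n [Hn Hcn]]. exists n; split; [exact Hn|].
      exists (Nat.b2n (Nat.even (b n))); split; [destruct (Nat.even (b n)); simpl; lia|].
      split; [exact Hcn|reflexivity]. }
    destruct (inf_seq _ Hip) as [g [Hg HPg]].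
    exists k; split; [exact Hk|].
    exists (fun n => b (g n)). split.
    + intros m n E. apply Hinj in E.
      destruct (lt_eq_lt_dec m n) as [[H|H]|H]; auto;
        specialize (Hg _ _ H); lia.
    + intros x [i [l [_ ->]]].
      destruct (lsum_par (fun n => b (g n)) (Nat.eqb p 1)) with (l := l) (i := i) as [j Hj].
      { intro n. destruct (HPg n) as [_ E]. rewrite <- E.
        destruct (Nat.even (b (g n))); reflexivity. }
      rewrite Hj. split; [apply HA|apply (HPg j)].
Qed.
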